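(* Let $\Delta\subset\mathbb{S}^2$ be a planar flag complex and let $(\Delta_1,\Delta_2)$ be a strong visual decomposition of $\Delta$ along an induced 4-cycle $\sigma$. If $R$ is a region (connected component) of $\mathbb{S}^2-\Delta$, then $R$ is a region of $\mathbb{S}^2-\Delta_1$ or a region of $\mathbb{S}^2-\Delta_2$.
   Context: A flag complex is a simplicial complex in which every complete subgraph of the 1-skeleton spans a simplex. For $\Delta\subset\mathbb{S}^2$, an induced 4-cycle $\sigma$ strongly separates $\Delta$ if $\Delta$ meets both components $U_1,U_2$ of $\mathbb{S}^2-\sigma$. In that case, letting $\Delta_i$ be $\sigma$ together with the components of $\Delta-\sigma$ lying in $U_i$, one has $\Delta=\Delta_1\cup\Delta_2$ and $\Delta_1\cap\Delta_2=\sigma$; the pair $(\Delta_1,\Delta_2)$ is called the strong visual decomposition of $\Delta$ along $\sigma$. *)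

(* Defs.v *)
From HB Require Import structures.
From mathcomp Require Import all_boot all_order all_algebra.
From mathcomp Require Import all_classical all_reals all_analysis.

Set Implicit Arguments. Unset Strict Implicit. Unset Printing Implicit Defensive.
Import Order.TTheory GRing.Theory Num.Theory numFieldNormedType.Exports.
Local Open Scope ring_scope.

Definition sphere2 (R : realType) : set 'rV[R]_3 :=
  [set x | \sum_(i < 3) x ord0 i ^+ 2 = 1]%classic.

Definition simplicial_complex (n : nat) (D : {set {set 'I_n}}) : Prop :=
  (forall s, s \in D -> s != finset.set0) /\
  (forall s t : {set 'I_n}, s \in D -> t \subset s -> t != finset.set0 -> t \in D).

Definition flag (n : nat) (D : {set {set 'I_n}}) : Prop :=
  forall s : {set 'I_n}, s != finset.set0 ->
    (forall i j : 'I_n, i \in s -> j \in s -> [set i; j] \in D) -> s \in D.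

Definition subcomplex (n : nat) (K D : {set {set 'I_n}}) : Prop :=
  simplicial_complex K /\ K \subset D.

(* Geometric realization |K| of a complex K on 'I_n, as a subset of R^n:
   points with nonnegative barycentric coordinates summing to 1 whose
   support is a face of K. *)
Definition realization (R : realType) (n : nat) (K : {set {set 'I_n}})
  : set 'rV[R]_n :=
  [set p | (forall i, 0 <= p ord0 i) /\ \sum_(i < n) p ord0 i = 1 /\
           finset.finset (fun i => p ord0 i != 0) \in K]%classic.

(* f is a topological embedding of |D| into S^2 (|D| is compact and S^2 is
   Hausdorff, so a continuous injection is an embedding). *)
Definition embedding_in_sphere (R : realType) (n : nat) (D : {set {set 'I_n}})
  (f : 'rV[R]_n -> 'rV[R]_3) : Prop :=
  ({within @realization R _ D, continuous f})%classic /\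
  (forall p q, @realization R _ D p -> @realization R _ D q -> f p = f q -> p = q) /\
  (f @` @realization R _ D `<=` @sphere2 R)%classic.

Definition cycle4 (n : nat) (a b c d : 'I_n) : {set {set 'I_n}} :=
  [set [set a]; [set b]; [set c]; [set d];
       [set a; b]; [set b; c]; [set c; d]; [set d; a]].

Definition induced_4cycle (n : nat) (D : {set {set 'I_n}}) (a b c d : 'I_n)
  : Prop :=
  uniq [:: a; b; c; d] /\
  [set a; b] \in D /\ [set b; c] \in D /\ [set c; d] \in D /\ [set d; a] \in D /\
  [set a; c] \notin D /\ [set b; d] \notin D.

Local Open Scope classical_set_scope.

Definition region (R : realType) (X C : set 'rV[R]_3) : Prop :=
  exists2 x, (@sphere2 R `\` X) x &
    C = connected_component (@sphere2 R `\` X) x.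

(* Given the images Dl = |Delta| and S = |sigma| in S^2, and a component U
   of S^2 - S, the piece of the strong visual decomposition on the U side:
   S together with the components of Dl - S lying in U. *)
Definition visual_piece (R : realType) (Dl S U : set 'rV[R]_3)
  : set 'rV[R]_3 :=
  S `|` [set y | (Dl `\` S) y /\ connected_component (Dl `\` S) y `<=` U].

(* Main.v *)
Require Import Defs.
From HB Require Import structures.
From mathcomp Require Import all_boot all_order all_algebra.
From mathcomp Require Import all_classical all_reals all_analysis.
Import numFieldNormedType.Exports.
Local Open Scope classical_set_scope.
Local Open Scope ring_scope.

Lemma core (R : realType) (sph Dl S U1 : set 'rV[R]_3) (x1 x : 'rV[R]_3) :
  S `<=` Dl -> Dl `<=` sph -> U1 = connected_component (sph `\` S) x1 ->
  U1 x -> (sph `\` Dl) x ->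
  connected_component (sph `\` Dl) x =
  connected_component (sph `\` visual_piece Dl S U1) x.
Proof.
move=> SD Dsph U1E U1x Dx.
have U1E' : U1 = connected_component (sph `\` S) x.
  by rewrite U1E; apply: same_connected_component; rewrite -U1E.
have PD : visual_piece Dl S U1 `<=` Dl.
  by move=> y [/SD//|[[]]].
apply/seteqP; split.
- apply: connected_component_max.
  + by apply: connected_component_refl.
  + move=> y /connected_component_sub [sy nDy]; split => // Py; apply: nDy.
    exact: PD.
  + exact: component_connected.
- apply: connected_component_max.
  + apply: connected_component_refl; case: Dx => sx nDx; split => // Px.
    by apply: nDx; apply: PD.
  + have CU : connected_component (sph `\` visual_piece Dl S U1) x `<=`
               connected_component (sph `\` S) x.
      apply: connected_component_max.
      * apply: connected_component_refl; case: Dx => sx nDx; split => // Px.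
        by apply: nDx; apply: PD.
      * move=> y /connected_component_sub [sy nPy]; split => // Sy.
        by apply: nPy; left.
      * exact: component_connected.
    rewrite -U1E' in CU.
    move=> y Cy; have := CU _ Cy.
    move: Cy => /connected_component_sub [sy nPy] U1y.
    split => // Dly.
    have nSy : ~ S y by move=> Sy; apply: nPy; left.
    apply: nPy; right; split; first by split.
    have U1y' : U1 = connected_component (sph `\` S) y.
      by rewrite U1E'; apply: same_connected_component; rewrite -U1E'.
    suff : connected_component (Dl `\` S) y `<=` connected_component (sph `\` S) y
      by rewrite -U1y'.
    apply: connected_component_max.
    * by apply: connected_component_refl.
    * move=> z /connected_component_sub [Dz nSz]; split => //; exact: Dsph.
    * exact: component_connected.
  + exact: component_connected.
Qed.

Lemma cycle4_sub (n : nat) (D : {set {set 'I_n}}) (a b c d : 'I_n) :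
  simplicial_complex D -> induced_4cycle D a b c d -> cycle4 a b c d \subset D.
Proof.
move=> [_ cl] [_ [ab [bc [cd [da _]]]]].
have sg : forall u v : 'I_n, ([set u; v] \in D)%SET -> ([set u] \in D)%SET.
  move=> u v uv; apply: (cl _ _ uv).
    by apply/fintype.subsetP => z; rewrite finset.in_set1 finset.in_set2 => ->.
  by apply/finset.set0Pn; exists u; rewrite finset.in_set1.
apply/fintype.subsetP => s; rewrite /cycle4 !inE.
move=> /orP[/orP[/orP[/orP[/orP[/orP[/orP[|]|]|]|]|]|]|] /eqP -> //.
- exact: sg ab.
- exact: sg bc.
- exact: sg cd.
- exact: sg da.
Qed.

Theorem lemma4p14 (R : realType) (n : nat) (D : {set {set 'I_n}})
  (f : 'rV[R]_n -> 'rV[R]_3) (a b c d : 'I_n) (U1 U2 : set 'rV[R]_3) :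
  simplicial_complex D -> flag D -> embedding_in_sphere D f ->
  induced_4cycle D a b c d ->
  (* U1, U2 are the two components of S^2 - |sigma| *)
  region (f @` @realization R _ (cycle4 a b c d)) U1 ->
  region (f @` @realization R _ (cycle4 a b c d)) U2 ->
  U1 <> U2 ->
  @sphere2 R `\` (f @` @realization R _ (cycle4 a b c d)) = U1 `|` U2 ->
  (* sigma strongly separates Delta *)
  (f @` @realization R _ D) `&` U1 !=set0 ->
  (f @` @realization R _ D) `&` U2 !=set0 ->
  forall Rg : set 'rV[R]_3,
    region (f @` @realization R _ D) Rg ->
    region (visual_piece (f @` @realization R _ D)
              (f @` @realization R _ (cycle4 a b c d)) U1) Rg \/
    region (visual_piece (f @` @realization R _ D)
              (f @` @realization R _ (cycle4 a b c d)) U2) Rg.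
Proof.
move=> sc _ [_ [_ emb]] ic [x1 sx1 U1E] [x2 sx2 U2E] _ cover _ _ Rg [x [sx nDx] RgE].
have csub := @cycle4_sub _ _ _ _ _ _ sc ic.
have SD : f @` realization (cycle4 a b c d) `<=` f @` realization D.
  move=> _ [p [p0 [p1 p2]] <-]; exists p => //; split => //; split => //.
  exact: (fintype.subsetP csub).
have nSx : (@sphere2 R `\` f @` realization (cycle4 a b c d)) x.
  by split => // Sx; apply: nDx; apply: SD.
have : (U1 `|` U2) x by rewrite -cover.
case=> Ux; [left|right]; exists x.
- split => // Px; apply: nDx; case: Px => [/SD//|[[]]//].
- by rewrite RgE; apply: (@core _ _ _ _ _ _ _ SD emb U1E Ux).
- split => // Px; apply: nDx; case: Px => [/SD//|[[]]//].
- by rewrite RgE; apply: (@core _ _ _ _ _ _ _ SD emb U2E Ux).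
Qed.
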